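(* If $\mathcal{D}$ is a fibrant double category, then the functor $\mathbf{Mnd}(\mathcal{D})\to\mathcal{D}_0$ is a fibration and the functor $\mathbf{Cmd}(\mathcal{D})\to\mathcal{D}_0$ is an opfibration, where both functors send a (co)monad $M\colon A\nrightarrow A$ to $A$ and a (co)monad morphism to its vertical source (equal to its target).
   Context: A (pseudo) double category $\mathcal{D}$ has a category $\mathcal{D}_0$ of objects and vertical 1-cells, a category $\mathcal{D}_1$ of horizontal 1-cells $M\colon A\nrightarrow B$ and 2-morphisms (squares with vertical source and target), units $1_A$, and horizontal composition $\odot$ associative and unital up to coherent globular isomorphisms (globular: identity vertical source and target). A monad in $\mathcal{D}$ is a horizontal endo-1-cell $M\colon A\nrightarrow A$ with globular 2-morphisms $m\colon M\odot M\Rightarrow M$ and $\eta\colon1_A\Rightarrow M$ satisfying associativity and unit laws; a monad morphism $M\to N$ ($N\colon B\nrightarrow B$) is a 2-morphism $M\Rightarrow N$ whose vertical source and target are the same $f\colon A\to B$, compatible with multiplications and units. This gives the category $\mathbf{Mnd}(\mathcal{D})$. Dually, comonads $C\colon A\nrightarrow A$ with globular $\Delta\colon C\Rightarrow C\odot C$, $\epsilon\colon C\Rightarrow1_A$ (coassociative, counital) and comonad morphisms (2-morphisms with equal vertical source and target compatible with $\Delta,\epsilon$) form $\mathbf{Cmd}(\mathcal{D})$. $\mathcal{D}$ is fibrant if every vertical $f\colon A\to B$ has a companion $\hat f\colon A\nrightarrow B$ (with $p_1\colon\hat f\Rightarrow1_B$ of vertical source $f$, target $\mathrm{id}_B$,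 and $p_2\colon1_A\Rightarrow\hat f$ of source $\mathrm{id}_A$, target $f$, $p_1p_2=1_f$, $p_1\odot p_2\cong1_{\hat f}$) and a conjoint $\check f\colon B\nrightarrow A$ (with $q_1\colon\check f\Rightarrow1_B$ of source $\mathrm{id}_B$, target $f$, $q_2\colon1_A\Rightarrow\check f$ of source $f$, target $\mathrm{id}_A$, $q_1q_2=1_f$, $q_2\odot q_1\cong1_{\check f}$). *)

(* Defs.v *)
(* Conventions:
   - vertical composition [vcomp f g] is diagrammatic: first f, then g;
   - vertical composition of squares [sqcomp a b]: first a, then b;
   - horizontal composition [hcomp M N] of M : A -|-> B and N : B -|-> C
     is diagrammatic; the paper's  N (.) M  is our  hcomp M N.  *)

Set Implicit Arguments.
Unset Strict Implicit.

Record DoubleCat : Type := {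
  ob : Type;
  vhom : ob -> ob -> Type;
  vid : forall A, vhom A A;
  vcomp : forall A B C, vhom A B -> vhom B C -> vhom A C;
  vcomp_id_l : forall A B (f : vhom A B), vcomp (vid A) f = f;
  vcomp_id_r : forall A B (f : vhom A B), vcomp f (vid B) = f;
  vcomp_assoc : forall A B C D (f : vhom A B) (g : vhom B C) (h : vhom C D),
      vcomp (vcomp f g) h = vcomp f (vcomp g h);
  hor : ob -> ob -> Type;
  sq : forall A B C D, hor A B -> hor C D -> Type;
  sqL : forall A B C D (M : hor A B) (N : hor C D), sq M N -> vhom A C;
  sqR : forall A B C D (M : hor A B) (N : hor C D), sq M N -> vhom B D;
  sqid : forall A B (M : hor A B), sq M M;
  sqid_L : forall A B (M : hor A B), sqL (sqid M) = vid A;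
  sqid_R : forall A B (M : hor A B), sqR (sqid M) = vid B;
  sqcomp : forall A B C D E F (M : hor A B) (N : hor C D) (P : hor E F),
      sq M N -> sq N P -> sq M P;
  sqcomp_L : forall A B C D E F (M : hor A B) (N : hor C D) (P : hor E F)
      (a : sq M N) (b : sq N P), sqL (sqcomp a b) = vcomp (sqL a) (sqL b);
  sqcomp_R : forall A B C D E F (M : hor A B) (N : hor C D) (P : hor E F)
      (a : sq M N) (b : sq N P), sqR (sqcomp a b) = vcomp (sqR a) (sqR b);
  sqcomp_id_l : forall A B C D (M : hor A B) (N : hor C D) (a : sq M N),
      sqcomp (sqid M) a = a;
  sqcomp_id_r : forall A B C D (M : hor A B) (N : hor C D) (a : sq M N),
      sqcomp a (sqid N) = a;
  sqcomp_assoc : forall A B C D E F G H (M : hor A B) (N : hor C D)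
      (P : hor E F) (Q : hor G H) (a : sq M N) (b : sq N P) (c : sq P Q),
      sqcomp (sqcomp a b) c = sqcomp a (sqcomp b c);
  hunit : forall A, hor A A;
  hunitSq : forall A B (f : vhom A B), sq (hunit A) (hunit B);
  hunitSq_L : forall A B (f : vhom A B), sqL (hunitSq f) = f;
  hunitSq_R : forall A B (f : vhom A B), sqR (hunitSq f) = f;
  hunitSq_id : forall A, hunitSq (vid A) = sqid (hunit A);
  hunitSq_comp : forall A B C (f : vhom A B) (g : vhom B C),
      hunitSq (vcomp f g) = sqcomp (hunitSq f) (hunitSq g);
  hcomp : forall A B C, hor A B -> hor B C -> hor A C;
  sqh : forall A B C A' B' C' (M : hor A B) (N : hor B C)
      (M' : hor A' B') (N' : hor B' C') (a : sq M M') (b : sq N N'),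
      sqR a = sqL b -> sq (hcomp M N) (hcomp M' N');
  sqh_L : forall A B C A' B' C' (M : hor A B) (N : hor B C)
      (M' : hor A' B') (N' : hor B' C') (a : sq M M') (b : sq N N')
      (e : sqR a = sqL b), sqL (sqh e) = sqL a;
  sqh_R : forall A B C A' B' C' (M : hor A B) (N : hor B C)
      (M' : hor A' B') (N' : hor B' C') (a : sq M M') (b : sq N N')
      (e : sqR a = sqL b), sqR (sqh e) = sqR b;
  sqh_id : forall A B C (M : hor A B) (N : hor B C)
      (e : sqR (sqid M) = sqL (sqid N)), sqh e = sqid (hcomp M N);
  sqh_comp : forall A B C A' B' C' A'' B'' C''
      (M : hor A B) (N : hor B C) (M' : hor A' B') (N' : hor B' C')
      (M'' : hor A'' B'') (N'' : hor B'' C'')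
      (a : sq M M') (b : sq N N') (a' : sq M' M'') (b' : sq N' N'')
      (e : sqR a = sqL b) (e' : sqR a' = sqL b')
      (e'' : sqR (sqcomp a a') = sqL (sqcomp b b')),
      sqh e'' = sqcomp (sqh e) (sqh e');
  assoc : forall A B C D (M : hor A B) (N : hor B C) (P : hor C D),
      sq (hcomp (hcomp M N) P) (hcomp M (hcomp N P));
  associnv : forall A B C D (M : hor A B) (N : hor B C) (P : hor C D),
      sq (hcomp M (hcomp N P)) (hcomp (hcomp M N) P);
  assoc_L : forall A B C D (M : hor A B) (N : hor B C) (P : hor C D),
      sqL (assoc M N P) = vid A;
  assoc_R : forall A B C D (M : hor A B) (N : hor B C) (P : hor C D),
      sqR (assoc M N P) = vid D;
  associnv_L : forall A B C D (M : hor A B) (N : hor B C) (P : hor C D),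
      sqL (associnv M N P) = vid A;
  associnv_R : forall A B C D (M : hor A B) (N : hor B C) (P : hor C D),
      sqR (associnv M N P) = vid D;
  assoc_inv1 : forall A B C D (M : hor A B) (N : hor B C) (P : hor C D),
      sqcomp (assoc M N P) (associnv M N P) = sqid (hcomp (hcomp M N) P);
  assoc_inv2 : forall A B C D (M : hor A B) (N : hor B C) (P : hor C D),
      sqcomp (associnv M N P) (assoc M N P) = sqid (hcomp M (hcomp N P));
  assoc_nat : forall A B C D A' B' C' D'
      (M : hor A B) (N : hor B C) (P : hor C D)
      (M' : hor A' B') (N' : hor B' C') (P' : hor C' D')
      (a : sq M M') (b : sq N N') (c : sq P P')
      (e1 : sqR a = sqL b) (e2 : sqR (sqh e1) = sqL c)
      (e3 : sqR b = sqL c) (e4 : sqR a = sqL (sqh e3)),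
      sqcomp (sqh e2) (assoc M' N' P') = sqcomp (assoc M N P) (sqh e4);
  lunit : forall A B (M : hor A B), sq (hcomp (hunit A) M) M;
  lunitinv : forall A B (M : hor A B), sq M (hcomp (hunit A) M);
  lunit_L : forall A B (M : hor A B), sqL (lunit M) = vid A;
  lunit_R : forall A B (M : hor A B), sqR (lunit M) = vid B;
  lunitinv_L : forall A B (M : hor A B), sqL (lunitinv M) = vid A;
  lunitinv_R : forall A B (M : hor A B), sqR (lunitinv M) = vid B;
  lunit_inv1 : forall A B (M : hor A B),
      sqcomp (lunit M) (lunitinv M) = sqid (hcomp (hunit A) M);
  lunit_inv2 : forall A B (M : hor A B), sqcomp (lunitinv M) (lunit M) = sqid M;
  lunit_nat : forall A B A' B' (M : hor A B) (M' : hor A' B') (a : sq M M')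
      (e : sqR (hunitSq (sqL a)) = sqL a),
      sqcomp (sqh e) (lunit M') = sqcomp (lunit M) a;
  runit : forall A B (M : hor A B), sq (hcomp M (hunit B)) M;
  runitinv : forall A B (M : hor A B), sq M (hcomp M (hunit B));
  runit_L : forall A B (M : hor A B), sqL (runit M) = vid A;
  runit_R : forall A B (M : hor A B), sqR (runit M) = vid B;
  runitinv_L : forall A B (M : hor A B), sqL (runitinv M) = vid A;
  runitinv_R : forall A B (M : hor A B), sqR (runitinv M) = vid B;
  runit_inv1 : forall A B (M : hor A B),
      sqcomp (runit M) (runitinv M) = sqid (hcomp M (hunit B));
  runit_inv2 : forall A B (M : hor A B), sqcomp (runitinv M) (runit M) = sqid M;
  runit_nat : forall A B A' B' (M : hor A B) (M' : hor A' B') (a : sq M M')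
      (e : sqR a = sqL (hunitSq (sqR a))),
      sqcomp (sqh e) (runit M') = sqcomp (runit M) a;
  pentagon : forall A B C D E (M : hor A B) (N : hor B C) (P : hor C D)
      (Q : hor D E)
      (e1 : sqR (assoc M N P) = sqL (sqid Q))
      (e2 : sqR (sqid M) = sqL (assoc N P Q)),
      sqcomp (assoc (hcomp M N) P Q) (assoc M N (hcomp P Q))
      = sqcomp (sqcomp (sqh e1) (assoc M (hcomp N P) Q)) (sqh e2);
  triangle : forall A B C (M : hor A B) (N : hor B C)
      (e1 : sqR (sqid M) = sqL (lunit N))
      (e2 : sqR (runit M) = sqL (sqid N)),
      sqcomp (assoc M (hunit B) N) (sqh e1) = sqh e2
}.

Arguments vid {d} A.
Arguments vcomp {d A B C} f g.
Arguments sq {d A B C D} M N.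
Arguments sqL {d A B C D M N} a.
Arguments sqR {d A B C D M N} a.
Arguments sqid {d A B} M.
Arguments sqcomp {d A B C D E F M N P} a b.
Arguments hunit {d} A.
Arguments hunitSq {d A B} f.
Arguments hcomp {d A B C} M N.
Arguments sqh {d A B C A' B' C' M N M' N' a b} e.
Arguments assoc {d A B C D} M N P.
Arguments associnv {d A B C D} M N P.
Arguments lunit {d A B} M.
Arguments lunitinv {d A B} M.
Arguments runit {d A B} M.
Arguments runitinv {d A B} M.

Section DC.
Variable D : DoubleCat.

Definition is_companion (A B : ob D) (f : vhom A B) (fh : hor A B) : Prop :=
  exists (p1 : sq fh (hunit B)) (p2 : sq (hunit A) fh),
    sqL p1 = f /\ sqR p1 = vid B /\ sqL p2 = vid A /\ sqR p2 = f /\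
    sqcomp p2 p1 = hunitSq f /\
    (* p1 (.) p2 ~= 1_fh, i.e. our sqh p2 p1, conjugated by unitors *)
    forall e : sqR p2 = sqL p1,
      sqcomp (sqcomp (lunitinv fh) (sqh e)) (runit fh) = sqid fh.

Definition is_conjoint (A B : ob D) (f : vhom A B) (fc : hor B A) : Prop :=
  exists (q1 : sq fc (hunit B)) (q2 : sq (hunit A) fc),
    sqL q1 = vid B /\ sqR q1 = f /\ sqL q2 = f /\ sqR q2 = vid A /\
    sqcomp q2 q1 = hunitSq f /\
    (* q2 (.) q1 ~= 1_fc, i.e. our sqh q1 q2, conjugated by unitors *)
    forall e : sqR q1 = sqL q2,
      sqcomp (sqcomp (runitinv fc) (sqh e)) (lunit fc) = sqid fc.

Definition fibrant : Prop :=
  forall (A B : ob D) (f : vhom A B),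
    (exists fh : hor A B, is_companion f fh) /\
    (exists fc : hor B A, is_conjoint f fc).

Record monad : Type := {
  mA : ob D;
  mM : hor mA mA;
  mmul : sq (hcomp mM mM) mM;
  munit : sq (hunit mA) mM;
  mmul_L : sqL mmul = vid mA;
  mmul_R : sqR mmul = vid mA;
  munit_L : sqL munit = vid mA;
  munit_R : sqR munit = vid mA;
  mmul_assoc : forall (e1 : sqR mmul = sqL (sqid mM))
      (e2 : sqR (sqid mM) = sqL mmul),
      sqcomp (sqh e1) mmul = sqcomp (assoc mM mM mM) (sqcomp (sqh e2) mmul);
  munit_left : forall e : sqR munit = sqL (sqid mM),
      sqcomp (sqh e) mmul = lunit mM;
  munit_right : forall e : sqR (sqid mM) = sqL munit,
      sqcomp (sqh e) mmul = runit mM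
}.

Record mnd_hom (X Y : monad) : Type := {
  mh : sq (mM X) (mM Y);
  mh_sides : sqL mh = sqR mh;
  mh_mul : forall e : sqR mh = sqL mh,
      sqcomp (mmul X) mh = sqcomp (sqh e) (mmul Y);
  mh_unit : sqcomp (munit X) mh = sqcomp (hunitSq (sqL mh)) (munit Y)
}.

(* the functor Mnd(D) -> D_0 on morphisms: the vertical source *)
Definition mnd_proj (X Y : monad) (a : mnd_hom X Y) : vhom (mA X) (mA Y) :=
  sqL (mh a).

Record comonad : Type := {
  cA : ob D;
  cC : hor cA cA;
  cdelta : sq cC (hcomp cC cC);
  ceps : sq cC (hunit cA);
  cdelta_L : sqL cdelta = vid cA;
  cdelta_R : sqR cdelta = vid cA;
  ceps_L : sqL ceps = vid cA;
  ceps_R : sqR ceps = vid cA;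
  cdelta_coassoc : forall (e1 : sqR cdelta = sqL (sqid cC))
      (e2 : sqR (sqid cC) = sqL cdelta),
      sqcomp (sqcomp cdelta (sqh e1)) (assoc cC cC cC)
      = sqcomp cdelta (sqh e2);
  ceps_left : forall e : sqR ceps = sqL (sqid cC),
      sqcomp (sqcomp cdelta (sqh e)) (lunit cC) = sqid cC;
  ceps_right : forall e : sqR (sqid cC) = sqL ceps,
      sqcomp (sqcomp cdelta (sqh e)) (runit cC) = sqid cC
}.

Record cmd_hom (X Y : comonad) : Type := {
  ch : sq (cC X) (cC Y);
  ch_sides : sqL ch = sqR ch;
  ch_delta : forall e : sqR ch = sqL ch,
      sqcomp (cdelta X) (sqh e) = sqcomp ch (cdelta Y);
  ch_eps : sqcomp (ceps X) (hunitSq (sqL ch)) = sqcomp ch (ceps Y)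
}.

Definition cmd_proj (X Y : comonad) (a : cmd_hom X Y) : vhom (cA X) (cA Y) :=
  sqL (ch a).

End DC.

Arguments mA {D} m.
Arguments cA {D} c.
Arguments mh {D X Y} m.
Arguments ch {D X Y} c.
Arguments mnd_proj {D X Y} a.
Arguments cmd_proj {D X Y} a.

Section Comp.
Variable D : DoubleCat.

Program Definition mnd_comp (X Y Z : monad D) (a : mnd_hom X Y) (b : mnd_hom Y Z)
  : mnd_hom X Z :=
  {| mh := sqcomp (mh a) (mh b) |}.
Next Obligation.
  intros. rewrite sqcomp_L, sqcomp_R, (mh_sides a), (mh_sides b). reflexivity.
Qed.
Next Obligation.
  intros X Y Z a b e.
  pose proof (eq_sym (mh_sides a)) as ea. pose proof (eq_sym (mh_sides b)) as eb.
  rewrite <- sqcomp_assoc, (@mh_mul _ _ _ a ea), sqcomp_assoc, (@mh_mul _ _ _ b eb).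
  rewrite <- sqcomp_assoc, <- (sqh_comp ea eb e). reflexivity.
Qed.
Next Obligation.
  intros X Y Z a b.
  rewrite <- sqcomp_assoc, (mh_unit a), sqcomp_assoc, (mh_unit b).
  rewrite <- sqcomp_assoc, <- hunitSq_comp, sqcomp_L. reflexivity.
Qed.

Program Definition cmd_comp (X Y Z : comonad D) (a : cmd_hom X Y) (b : cmd_hom Y Z)
  : cmd_hom X Z :=
  {| ch := sqcomp (ch a) (ch b) |}.
Next Obligation.
  intros. rewrite sqcomp_L, sqcomp_R, (ch_sides a), (ch_sides b). reflexivity.
Qed.
Next Obligation.
  intros X Y Z a b e.
  pose proof (eq_sym (ch_sides a)) as ea. pose proof (eq_sym (ch_sides b)) as eb.
  rewrite (sqh_comp ea eb e), <- sqcomp_assoc, (@ch_delta _ _ _ a ea).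
  rewrite sqcomp_assoc, (@ch_delta _ _ _ b eb), <- sqcomp_assoc. reflexivity.
Qed.
Next Obligation.
  intros X Y Z a b.
  rewrite sqcomp_L, hunitSq_comp, <- sqcomp_assoc, (ch_eps a).
  rewrite sqcomp_assoc, (ch_eps b), <- sqcomp_assoc. reflexivity.
Qed.
End Comp.

Arguments mnd_comp {D X Y Z} a b.
Arguments cmd_comp {D X Y Z} a b.

(* ---------- Grothendieck (op)fibrations ----------
   A functor p : E -> B is given by its object part [p] and morphism part
   [pm]; composition in both categories is diagrammatic. *)
Section Fib.
Variables (B : Type) (BH : B -> B -> Type)
          (Bcomp : forall x y z, BH x y -> BH y z -> BH x z)
          (E : Type) (EH : E -> E -> Type)
          (Ecomp : forall x y z, EH x y -> EH y z -> EH x z)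
          (p : E -> B) (pm : forall x y, EH x y -> BH (p x) (p y)).

Definition cartesian (Y X : E) (phi : EH Y X) : Prop :=
  forall (Z : E) (g : EH Z X) (h : BH (p Z) (p Y)),
    pm g = Bcomp h (pm phi) ->
    exists k : EH Z Y, (pm k = h /\ Ecomp k phi = g) /\
      forall k' : EH Z Y, pm k' = h /\ Ecomp k' phi = g -> k' = k.

Definition cocartesian (X Y : E) (phi : EH X Y) : Prop :=
  forall (Z : E) (g : EH X Z) (h : BH (p Y) (p Z)),
    pm g = Bcomp (pm phi) h ->
    exists k : EH Y Z, (pm k = h /\ Ecomp phi k = g) /\
      forall k' : EH Y Z, pm k' = h /\ Ecomp phi k' = g -> k' = k.

(* every f : A -> p X has a cartesian lift phi : Y -> X, with p phi = f
   (equality of arrows, i.e. also p Y = A) *)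
Definition is_fibration : Prop :=
  forall (X : E) (A : B) (f : BH A (p X)),
    exists (Y : E) (phi : EH Y X),
      existT (fun A' => BH A' (p X)) (p Y) (pm phi)
      = existT (fun A' => BH A' (p X)) A f
      /\ cartesian phi.

Definition is_opfibration : Prop :=
  forall (X : E) (A : B) (f : BH (p X) A),
    exists (Y : E) (phi : EH X Y),
      existT (fun A' => BH (p X) A') (p Y) (pm phi)
      = existT (fun A' => BH (p X) A') A f
      /\ cocartesian phi.
End Fib.

(* Main.v *)
Require Import Defs.
From Stdlib Require Import ProofIrrelevance.
Set Implicit Arguments.
Unset Strict Implicit.


Create HintDb vsimp.
#[export] Hint Rewrite sqcomp_L sqcomp_R sqh_L sqh_R sqid_L sqid_R hunitSq_L hunitSq_R
  assoc_L assoc_R associnv_L associnv_R lunit_L lunit_R lunitinv_L lunitinv_R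
  runit_L runit_R runitinv_L runitinv_R vcomp_id_l vcomp_id_r vcomp_assoc
  mmul_L mmul_R munit_L munit_R cdelta_L cdelta_R ceps_L ceps_R : vsimp.

Ltac vs := repeat progress (autorewrite with vsimp;
   try (match goal with H : sqL ?x = ?y |- context[sqL ?x] =>
          lazymatch y with context[sqR x] => fail | _ => rewrite H end end);
   try (match goal with H : sqR ?x = ?y |- context[sqR ?x] =>
          lazymatch y with context[sqL x] => fail | _ => rewrite H end end));
   reflexivity.

Notation "a ⊙ b" := (@sqh _ _ _ _ _ _ _ _ _ _ _ a b ltac:(vs)) (at level 40, left associativity).
Notation "[[ a | b ]]" := (@sqh _ _ _ _ _ _ _ _ _ _ _ a b _) (only printing).
Notation "a ;; b" := (sqcomp a b) (at level 45, left associativity).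

Ltac idsimp := rewrite ?sqcomp_id_l, ?sqcomp_id_r, ?lunit_inv1, ?lunit_inv2, ?runit_inv1,
  ?runit_inv2, ?assoc_inv1, ?assoc_inv2, ?associnv_L.

Section Basic.
Variable D : DoubleCat.

Lemma sqh_irr (A B C A' B' C' : ob D) (M : hor A B) (N : hor B C)
  (M' : hor A' B') (N' : hor B' C') (a : sq M M') (b : sq N N') (e e' : sqR a = sqL b) :
  sqh e = sqh e'.
Proof. f_equal; apply proof_irrelevance. Qed.

Lemma hcongr (A B C A' B' C' : ob D) (M : hor A B) (N : hor B C)
  (M' : hor A' B') (N' : hor B' C') (a a' : sq M M') (b b' : sq N N')
  (e : sqR a = sqL b) (e' : sqR a' = sqL b') : a = a' -> b = b' -> sqh e = sqh e'.
Proof. intros -> ->; apply sqh_irr. Qed.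

Lemma merge (A B C A' B' C' A'' B'' C'' : ob D)
      (M : hor A B) (N : hor B C) (M' : hor A' B') (N' : hor B' C')
      (M'' : hor A'' B'') (N'' : hor B'' C'')
      (a : sq M M') (b : sq N N') (a' : sq M' M'') (b' : sq N' N'')
      (e : sqR a = sqL b) (e' : sqR a' = sqL b') (e'' : sqR (a ;; a') = sqL (b ;; b')) :
      sqh e ;; sqh e' = sqh e''.
Proof. symmetry; apply sqh_comp. Qed.

Lemma mergeE (A B C A' B' C' A'' B'' C'' : ob D)
      (M : hor A B) (N : hor B C) (M' : hor A' B') (N' : hor B' C')
      (M'' : hor A'' B'') (N'' : hor B'' C'')
      (a : sq M M') (b : sq N N') (a' : sq M' M'') (b' : sq N' N'')
      (e : sqR a = sqL b) (e' : sqR a' = sqL b') : sqR (a ;; a') = sqL (b ;; b').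
Proof. rewrite sqcomp_R, sqcomp_L, e, e'; reflexivity. Qed.

Lemma merge' (A B C A' B' C' A'' B'' C'' : ob D)
      (M : hor A B) (N : hor B C) (M' : hor A' B') (N' : hor B' C')
      (M'' : hor A'' B'') (N'' : hor B'' C'')
      (a : sq M M') (b : sq N N') (a' : sq M' M'') (b' : sq N' N'')
      (e : sqR a = sqL b) (e' : sqR a' = sqL b') :
      sqh e ;; sqh e' = sqh (mergeE e e').
Proof. apply merge. Qed.

Lemma sqh_idid (A B C : ob D) (M : hor A B) (N : hor B C) (e : sqR (sqid M) = sqL (sqid N)) :
  sqh e = sqid (hcomp M N).
Proof. apply sqh_id. Qed.


Lemma cong_l (A B C E F G : ob D) (P : hor A B) (Q : hor C E) (R : hor F G) (x y : sq P Q) (z : sq Q R) :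
  x = y -> x ;; z = y ;; z.
Proof. intros ->; reflexivity. Qed.
Lemma cong_r (A B C E F G : ob D) (P : hor A B) (Q : hor C E) (R : hor F G) (x y : sq Q R) (z : sq P Q) :
  x = y -> z ;; x = z ;; y.
Proof. intros ->; reflexivity. Qed.

Lemma cancel_l (A B C E : ob D) (P : hor A B) (Q : hor C E) (x : sq P Q) (y : sq Q P)
  (F G : ob D) (R : hor F G) (u v : sq Q R) :
  y ;; x = sqid Q -> x ;; u = x ;; v -> u = v.
Proof.
  intros H1 H2. rewrite <- (sqcomp_id_l u), <- (sqcomp_id_l v), <- H1, !sqcomp_assoc, H2. reflexivity.
Qed.

Lemma cancel_r (A B C E : ob D) (P : hor A B) (Q : hor C E) (x : sq P Q) (y : sq Q P)
  (F G : ob D) (R : hor F G) (u v : sq R P) :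
  x ;; y = sqid P -> u ;; x = v ;; x -> u = v.
Proof.
  intros H1 H2. rewrite <- (sqcomp_id_r u), <- (sqcomp_id_r v), <- H1, <- !sqcomp_assoc, H2. reflexivity.
Qed.

Lemma lunit_nat_id (A B B' : ob D) (M : hor A B) (M' : hor A B') (a : sq M M')
  (e : sqR (sqid (hunit A)) = sqL a) : sqh e ;; lunit M' = lunit M ;; a.
Proof.
  assert (H : sqL a = vid A) by (rewrite <- e; apply sqid_R).
  assert (e' : sqR (hunitSq (sqL a)) = sqL a) by (rewrite hunitSq_R; reflexivity).
  rewrite <- (lunit_nat e'). f_equal. apply hcongr; [|reflexivity].
  rewrite H, hunitSq_id. reflexivity.
Qed.

Lemma runit_nat_id (A B A' : ob D) (M : hor A B) (M' : hor A' B) (a : sq M M')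
  (e : sqR a = sqL (sqid (hunit B))) : sqh e ;; runit M' = runit M ;; a.
Proof.
  assert (H : sqR a = vid B) by (rewrite e; apply sqid_L).
  assert (e' : sqR a = sqL (hunitSq (sqR a))) by (rewrite hunitSq_L; reflexivity).
  rewrite <- (runit_nat e'). f_equal. apply hcongr; [reflexivity|].
  rewrite H, hunitSq_id. reflexivity.
Qed.

Lemma lunit_nat2 (A B A' B' : ob D) (M : hor A B) (M' : hor A' B') (a : sq M M')
  (g : vhom A A') (e : sqR (hunitSq g) = sqL a) : sqh e ;; lunit M' = lunit M ;; a.
Proof.
  assert (H : sqL a = g) by (rewrite <- e; apply hunitSq_R). subst g. apply lunit_nat.
Qed.

Lemma runit_nat2 (A B A' B' : ob D) (M : hor A B) (M' : hor A' B') (a : sq M M')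
  (g : vhom B B') (e : sqR a = sqL (hunitSq g)) : sqh e ;; runit M' = runit M ;; a.
Proof.
  assert (H : sqR a = g) by (rewrite e; apply hunitSq_L). subst g. apply runit_nat.
Qed.

Lemma linj (A B E : ob D) (X : hor A B) (Y : hor A E) (x y : sq X Y)
  (ex : sqR (sqid (hunit A)) = sqL x) (ey : sqR (sqid (hunit A)) = sqL y) :
  sqh ex = sqh ey -> x = y.
Proof.
  intro H.
  apply (cancel_l (x := lunit X) (y := lunitinv X)); [apply lunit_inv2|].
  rewrite <- (lunit_nat_id ex), <- (lunit_nat_id ey), H. reflexivity.
Qed.

Lemma rinj (A B C : ob D) (X : hor A B) (Y : hor C B) (x y : sq X Y)
  (ex : sqR x = sqL (sqid (hunit B))) (ey : sqR y = sqL (sqid (hunit B))) :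
  sqh ex = sqh ey -> x = y.
Proof.
  intro H.
  apply (cancel_l (x := runit X) (y := runitinv X)); [apply runit_inv2|].
  rewrite <- (runit_nat_id ex), <- (runit_nat_id ey), H. reflexivity.
Qed.

Lemma hid (A B C : ob D) (M : hor A B) (N : hor B C) (a : sq M M) (b : sq N N)
  (e : sqR a = sqL b) : a = sqid M -> b = sqid N -> sqh e = sqid (hcomp M N).
Proof. intros -> ->; apply sqh_id. Qed.

Lemma tri' (A B C : ob D) (M : hor A B) (N : hor B C) (e1 : sqR (sqid M) = sqL (lunit N)) :
  assoc M (hunit B) N ;; sqh e1 = runit M ⊙ sqid N.
Proof. apply triangle. Qed.

Section Nat.
Variables (A B C E A' B' C' E' : ob D) (M : hor A B) (N : hor B C) (P : hor C E)
  (M' : hor A' B') (N' : hor B' C') (P' : hor C' E')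
  (a : sq M M') (b : sq N N') (c : sq P P').

Lemma ainat_gen (e1 : sqR a = sqL b) (e2 : sqR (sqh e1) = sqL c)
      (e3 : sqR b = sqL c) (e4 : sqR a = sqL (sqh e3)) :
  associnv M N P ;; sqh e2 = sqh e4 ;; associnv M' N' P'.
Proof.
  apply (cancel_r (x := assoc M' N' P') (y := associnv M' N' P')); [apply assoc_inv1|].
  rewrite !sqcomp_assoc, assoc_inv2, sqcomp_id_r, (assoc_nat e2 e4), <- sqcomp_assoc,
    assoc_inv2, sqcomp_id_l. reflexivity.
Qed.

Definition e3of (e1 : sqR a = sqL b) (e2 : sqR (sqh e1) = sqL c) : sqR b = sqL c :=
  eq_trans (eq_sym (sqh_R e1)) e2.
Definition e4of (e3 : sqR b = sqL c) (e1 : sqR a = sqL b) : sqR a = sqL (sqh e3) :=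
  eq_trans e1 (eq_sym (sqh_L e3)).
Definition e1of (e3 : sqR b = sqL c) (e4 : sqR a = sqL (sqh e3)) : sqR a = sqL b :=
  eq_trans e4 (sqh_L e3).
Definition e2of (e1 : sqR a = sqL b) (e3 : sqR b = sqL c) : sqR (sqh e1) = sqL c :=
  eq_trans (sqh_R e1) e3.

Lemma anat_l (e1 : sqR a = sqL b) (e2 : sqR (sqh e1) = sqL c) :
  sqh e2 ;; assoc M' N' P' = assoc M N P ;; sqh (@e4of (@e3of e1 e2) e1).
Proof. apply assoc_nat. Qed.
Lemma anat_r (e3 : sqR b = sqL c) (e4 : sqR a = sqL (sqh e3)) :
  assoc M N P ;; sqh e4 = sqh (@e2of (@e1of e3 e4) e3) ;; assoc M' N' P'.
Proof. symmetry; apply assoc_nat. Qed.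
Lemma ainat_l (e3 : sqR b = sqL c) (e4 : sqR a = sqL (sqh e3)) :
  sqh e4 ;; associnv M' N' P' = associnv M N P ;; sqh (@e2of (@e1of e3 e4) e3).
Proof. symmetry; apply ainat_gen. Qed.
Lemma ainat_r (e1 : sqR a = sqL b) (e2 : sqR (sqh e1) = sqL c) :
  associnv M N P ;; sqh e2 = sqh (@e4of (@e3of e1 e2) e1) ;; associnv M' N' P'.
Proof. apply ainat_gen. Qed.
End Nat.

Lemma kelly_l (A B C : ob D) (X : hor A B) (Y : hor B C) :
  assoc (hunit A) X Y ;; lunit (hcomp X Y) = lunit X ⊙ sqid Y.
Proof.
  match goal with |- ?x = ?y => apply (@linj _ _ _ _ _ x y ltac:(vs) ltac:(vs)) end.
  transitivity ((sqid (hunit A) ⊙ assoc (hunit A) X Y) ;; (sqid (hunit A) ⊙ lunit (hcomp X Y))).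
  { rewrite merge'. apply hcongr; [rewrite sqcomp_id_l|]; reflexivity. }
  apply (cancel_l (x := assoc (hunit A) (hcomp (hunit A) X) Y) (y := associnv (hunit A) (hcomp (hunit A) X) Y));
    [apply assoc_inv2|].
  apply (cancel_l (x := assoc (hunit A) (hunit A) X ⊙ sqid Y) (y := associnv (hunit A) (hunit A) X ⊙ sqid Y)).
  { rewrite merge'. apply hid; [apply assoc_inv2|apply sqcomp_id_l]. }
  rewrite <- !sqcomp_assoc.
  rewrite <- pentagon.
  rewrite (sqcomp_assoc (assoc (hcomp (hunit A) (hunit A)) X Y)), tri'.
  rewrite (sqcomp_assoc (sqh _) (assoc (hunit A) (hcomp (hunit A) X) Y)), anat_r.
  rewrite <- sqcomp_assoc, merge'.
  transitivity ((runit (hunit A) ⊙ sqid X) ⊙ sqid Y ;; assoc (hunit A) X Y).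
  2:{ f_equal. apply hcongr; [|symmetry; apply sqcomp_id_l]. rewrite tri'. reflexivity. }
  rewrite anat_l. f_equal. apply hcongr; [reflexivity|]. symmetry; apply sqh_id.
Qed.
Lemma pent' (A B C E F : ob D) (M : hor A B) (N : hor B C) (P : hor C E) (Q : hor E F) :
  assoc (hcomp M N) P Q ;; assoc M N (hcomp P Q) =
  (assoc M N P ⊙ sqid Q) ;; assoc M (hcomp N P) Q ;; (sqid M ⊙ assoc N P Q).
Proof. apply pentagon. Qed.

Lemma kelly_r (A B C : ob D) (X : hor A B) (Y : hor B C) :
  assoc X Y (hunit C) ;; (sqid X ⊙ runit Y) = runit (hcomp X Y).
Proof.
  match goal with |- ?x = ?y => apply (@rinj _ _ _ _ _ x y ltac:(vs) ltac:(vs)) end.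
  transitivity ((assoc X Y (hunit C) ⊙ sqid (hunit C)) ;; ((sqid X ⊙ runit Y) ⊙ sqid (hunit C))).
  { rewrite merge'. apply hcongr; [|rewrite sqcomp_id_l]; reflexivity. }
  apply (cancel_r (x := assoc X Y (hunit C)) (y := associnv X Y (hunit C))); [apply assoc_inv1|].
  transitivity (assoc (hcomp X Y) (hunit C) (hunit C) ;; assoc X Y (hcomp (hunit C) (hunit C)) ;;
     (sqid X ⊙ (sqid Y ⊙ lunit (hunit C)))).
  { rewrite sqcomp_assoc, anat_l, pent'.
    rewrite !sqcomp_assoc. f_equal. f_equal. rewrite merge'. apply hcongr.
    - symmetry; apply sqcomp_id_l.
    - rewrite tri'. apply sqh_irr. }
  transitivity (assoc (hcomp X Y) (hunit C) (hunit C) ;; (sqid (hcomp X Y) ⊙ lunit (hunit C)) ;; assoc X Y (hunit C)).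
  2:{ f_equal. rewrite tri'. apply sqh_irr. }
  rewrite !sqcomp_assoc. f_equal. symmetry.
  transitivity ((sqid X ⊙ sqid Y) ⊙ lunit (hunit C) ;; assoc X Y (hunit C)).
  { f_equal. apply hcongr; [|reflexivity]. symmetry; apply sqh_id. }
  rewrite anat_l. apply f_equal. apply hcongr; [reflexivity|apply sqh_irr].
Qed.

Lemma lunitinv_nat2 (A B A' B' : ob D) (M : hor A B) (M' : hor A' B') (a : sq M M')
  (g : vhom A A') (e : sqR (hunitSq g) = sqL a) : lunitinv M ;; sqh e = a ;; lunitinv M'.
Proof.
  apply (cancel_r (x := lunit M') (y := lunitinv M')); [apply lunit_inv1|].
  rewrite !sqcomp_assoc, lunit_inv2, sqcomp_id_r, lunit_nat2, <- sqcomp_assoc, lunit_inv2, sqcomp_id_l.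
  reflexivity.
Qed.

Lemma runitinv_nat2 (A B A' B' : ob D) (M : hor A B) (M' : hor A' B') (a : sq M M')
  (g : vhom B B') (e : sqR a = sqL (hunitSq g)) : runitinv M ;; sqh e = a ;; runitinv M'.
Proof.
  apply (cancel_r (x := runit M') (y := runitinv M')); [apply runit_inv1|].
  rewrite !sqcomp_assoc, runit_inv2, sqcomp_id_r, runit_nat2, <- sqcomp_assoc, runit_inv2, sqcomp_id_l.
  reflexivity.
Qed.

Lemma triL (A B C : ob D) (X : hor A B) (M : hor B C) :
  sqid X ⊙ lunit M = associnv X (hunit B) M ;; (runit X ⊙ sqid M).
Proof.
  apply (cancel_l (x := assoc X (hunit B) M) (y := associnv X (hunit B) M)); [apply assoc_inv2|].
  rewrite tri', <- sqcomp_assoc, assoc_inv1, sqcomp_id_l. apply sqh_irr.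
Qed.

Lemma triLi (A B C : ob D) (X : hor A B) (M : hor B C) :
  sqid X ⊙ lunitinv M = (runitinv X ⊙ sqid M) ;; assoc X (hunit B) M.
Proof.
  apply (cancel_r (x := sqid X ⊙ lunit M) (y := sqid X ⊙ lunitinv M)).
  { rewrite merge'. apply hid; [apply sqcomp_id_l|apply lunit_inv1]. }
  rewrite merge'. rewrite sqcomp_assoc, tri', merge'.
  apply hcongr; idsimp; reflexivity.
Qed.

Lemma triRi (A B C : ob D) (X : hor A B) (M : hor B C) :
  runitinv X ⊙ sqid M = (sqid X ⊙ lunitinv M) ;; associnv X (hunit B) M.
Proof.
  rewrite triLi, sqcomp_assoc, assoc_inv1, sqcomp_id_r. apply sqh_irr.
Qed.

Lemma kelly_l' (A B C : ob D) (X : hor A B) (Y : hor B C) :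
  associnv (hunit A) X Y ;; (lunit X ⊙ sqid Y) = lunit (hcomp X Y).
Proof. rewrite <- kelly_l, <- sqcomp_assoc, assoc_inv2, sqcomp_id_l. reflexivity. Qed.

Lemma kelly_li (A B C : ob D) (X : hor A B) (Y : hor B C) :
  (lunitinv X ⊙ sqid Y) ;; assoc (hunit A) X Y = lunitinv (hcomp X Y).
Proof.
  apply (cancel_r (x := lunit (hcomp X Y)) (y := lunitinv (hcomp X Y))); [apply lunit_inv1|].
  rewrite lunit_inv2, sqcomp_assoc, kelly_l, merge'. apply hid; [apply lunit_inv2|apply sqcomp_id_l].
Qed.

Lemma kelly_r' (A B C : ob D) (X : hor A B) (Y : hor B C) :
  associnv X Y (hunit C) ;; runit (hcomp X Y) = sqid X ⊙ runit Y.
Proof. rewrite <- kelly_r, <- sqcomp_assoc, assoc_inv2, sqcomp_id_l. reflexivity. Qed.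

Lemma kelly_ri (A B C : ob D) (X : hor A B) (Y : hor B C) :
  (sqid X ⊙ runitinv Y) ;; associnv X Y (hunit C) = runitinv (hcomp X Y).
Proof.
  apply (cancel_r (x := runit (hcomp X Y)) (y := runitinv (hcomp X Y))); [apply runit_inv1|].
  rewrite runit_inv2, sqcomp_assoc, kelly_r', merge'. apply hid; [apply sqcomp_id_l|apply runit_inv2].
Qed.

End Basic.


Section Cells.
Variable D : DoubleCat.

Definition cart (A' B' A B : ob D) (P : hor A' B') (M : hor A B) (r : sq P M) : Type :=
  ((forall X Y (N : hor X Y) (th : sq N M) (g : vhom X A') (h : vhom Y B'),
    sqL th = vcomp g (sqL r) -> sqR th = vcomp h (sqR r) ->
    {k : sq N P | sqL k = g /\ sqR k = h /\ k ;; r = th}) *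
  (forall X Y (N : hor X Y) (k k' : sq N P), sqL k = sqL k' -> sqR k = sqR k' ->
    k ;; r = k' ;; r -> k = k'))%type.

Definition cocart (A B A' B' : ob D) (M : hor A B) (P : hor A' B') (s : sq M P) : Type :=
  ((forall X Y (N : hor X Y) (th : sq M N) (g : vhom A' X) (h : vhom B' Y),
    sqL th = vcomp (sqL s) g -> sqR th = vcomp (sqR s) h ->
    {k : sq P N | sqL k = g /\ sqR k = h /\ s ;; k = th}) *
  (forall X Y (N : hor X Y) (k k' : sq P N), sqL k = sqL k' -> sqR k = sqR k' ->
    s ;; k = s ;; k' -> k = k'))%type.

Lemma cart_comp (A2 B2 A1 B1 A B : ob D) (P2 : hor A2 B2) (P1 : hor A1 B1) (M : hor A B)
  (r2 : sq P2 P1) (r1 : sq P1 M) : cart r2 -> cart r1 -> cart (r2 ;; r1).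
Proof.
  intros [ex2 un2] [ex1 un1]. split.
  - intros X Y N th g h Hl Hr.
    destruct (ex1 X Y N th (vcomp g (sqL r2)) (vcomp h (sqR r2))) as [k1 [Hk1l [Hk1r Hk1]]].
    { rewrite Hl, sqcomp_L, vcomp_assoc. reflexivity. }
    { rewrite Hr, sqcomp_R, vcomp_assoc. reflexivity. }
    destruct (ex2 X Y N k1 g h Hk1l Hk1r) as [k2 [Hk2l [Hk2r Hk2]]].
    exists k2. split; [exact Hk2l|split; [exact Hk2r|]].
    rewrite <- sqcomp_assoc, Hk2. exact Hk1.
  - intros X Y N k k' HL HR H. apply un2; auto. apply un1.
    + rewrite !sqcomp_L, HL. reflexivity.
    + rewrite !sqcomp_R, HR. reflexivity.
    + rewrite !sqcomp_assoc. exact H.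
Qed.

Lemma cocart_comp (A B A1 B1 A2 B2 : ob D) (M : hor A B) (P1 : hor A1 B1) (P2 : hor A2 B2)
  (s1 : sq M P1) (s2 : sq P1 P2) : cocart s1 -> cocart s2 -> cocart (s1 ;; s2).
Proof.
  intros [ex1 un1] [ex2 un2]. split.
  - intros X Y N th g h Hl Hr.
    destruct (ex1 X Y N th (vcomp (sqL s2) g) (vcomp (sqR s2) h)) as [k1 [Hk1l [Hk1r Hk1]]].
    { rewrite Hl, sqcomp_L, vcomp_assoc. reflexivity. }
    { rewrite Hr, sqcomp_R, vcomp_assoc. reflexivity. }
    destruct (ex2 X Y N k1 g h Hk1l Hk1r) as [k2 [Hk2l [Hk2r Hk2]]].
    exists k2. split; [exact Hk2l|split; [exact Hk2r|]].
    rewrite sqcomp_assoc, Hk2. exact Hk1.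
  - intros X Y N k k' HL HR H. apply un2; auto. apply un1.
    + rewrite !sqcomp_L, HL. reflexivity.
    + rewrite !sqcomp_R, HR. reflexivity.
    + rewrite <- !sqcomp_assoc. exact H.
Qed.

Section Comp.
Variables (A B : ob D) (f : vhom A B) (fh : hor A B) (p1 : sq fh (hunit B)) (p2 : sq (hunit A) fh)
 (H1L : sqL p1 = f) (H1R : sqR p1 = vid B) (H2L : sqL p2 = vid A) (H2R : sqR p2 = f)
 (Hc : p2 ;; p1 = hunitSq f)
 (Hk : forall e : sqR p2 = sqL p1, lunitinv fh ;; sqh e ;; runit fh = sqid fh).

Lemma compA (e : sqR p2 = sqL p1) : sqh e ;; runit fh = lunit fh.
Proof.
  rewrite <- (sqcomp_id_l (sqh e ;; runit fh)), <- lunit_inv1, !sqcomp_assoc, <- (sqcomp_assoc (lunitinv fh)), Hk.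
  apply sqcomp_id_r.
Qed.

Lemma compB (e : sqR p2 = sqL p1) : lunitinv fh ;; sqh e = runitinv fh.
Proof.
  rewrite <- (sqcomp_id_r (lunitinv fh ;; sqh e)), <- runit_inv1, <- !sqcomp_assoc, Hk.
  apply sqcomp_id_l.
Qed.

Lemma lkey (C : ob D) (M : hor B C) :
  lunitinv (hcomp fh M) ;; (p2 ⊙ ((p1 ⊙ sqid M) ;; lunit M)) = sqid _.
Proof.
  transitivity (lunitinv (hcomp fh M) ;; ((p2 ⊙ (p1 ⊙ sqid M)) ;; (sqid fh ⊙ lunit M))).
  { apply f_equal. rewrite merge'. apply hcongr; idsimp; reflexivity. }
  rewrite triL.
  rewrite <- (sqcomp_assoc (sqh _) (associnv _ _ _)), ainat_l.
  rewrite sqcomp_assoc, merge'.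
  transitivity (lunitinv (hcomp fh M) ;; (associnv (hunit A) fh M ;; (lunit fh ⊙ sqid M))).
  { apply f_equal. apply f_equal. apply hcongr; [apply compA|apply sqcomp_id_l]. }
  rewrite kelly_l'. apply lunit_inv2.
Qed.

Lemma lphi (C X Y : ob D) (M : hor B C) (N : hor X Y) (k : sq N (hcomp fh M)) :
  lunitinv N ;; ((hunitSq (sqL k) ;; p2) ⊙ (k ;; ((p1 ⊙ sqid M) ;; lunit M))) = k.
Proof.
  transitivity (lunitinv N ;; ((hunitSq (sqL k) ⊙ k) ;; (p2 ⊙ ((p1 ⊙ sqid M) ;; lunit M)))).
  { apply f_equal. rewrite merge'. apply sqh_irr. }
  rewrite <- sqcomp_assoc, lunitinv_nat2, sqcomp_assoc, lkey. apply sqcomp_id_r.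
Qed.

Lemma lcell_cart (C : ob D) (M : hor B C) : cart ((p1 ⊙ sqid M) ;; lunit M).
Proof.
  split.
  - intros X Y N th g h Hl Hr.
    exists (lunitinv N ;; ((hunitSq g ;; p2) ⊙ th)).
    split; [vs|split; [vs|]].
    transitivity (lunitinv N ;; (hunitSq (vcomp g f) ⊙ th ;; lunit M)).
    { rewrite !sqcomp_assoc. apply f_equal. rewrite <- sqcomp_assoc, merge'. apply cong_l.
      apply hcongr.
      - rewrite sqcomp_assoc, Hc, hunitSq_comp. reflexivity.
      - apply sqcomp_id_r. }
    rewrite lunit_nat2, <- sqcomp_assoc, lunit_inv2. apply sqcomp_id_l.
  - intros X Y N k k' HL HR H.
    rewrite <- (lphi k), <- (lphi k'). apply f_equal. apply hcongr; [|exact H].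
    rewrite HL. reflexivity.
Qed.

Lemma rkey' (Z : ob D) (C : hor Z A) :
  ((runitinv C ;; (sqid C ⊙ p2)) ⊙ p1) ;; runit (hcomp C fh) = sqid _.
Proof.
  transitivity ((sqid C ⊙ lunitinv fh) ;; associnv C (hunit A) fh ;; ((sqid C ⊙ p2) ⊙ p1) ;; runit (hcomp C fh)).
  { apply cong_l. rewrite <- triRi, merge'. apply hcongr; idsimp; reflexivity. }
  rewrite (sqcomp_assoc (sqh _) (associnv _ _ _)), ainat_r.
  transitivity ((sqid C ⊙ runitinv fh) ;; associnv C fh (hunit B) ;; runit (hcomp C fh)).
  { apply cong_l. rewrite <- sqcomp_assoc. apply cong_l. rewrite merge'.
    apply hcongr; [idsimp; reflexivity| apply compB]. }
  rewrite sqcomp_assoc, kelly_r', merge'. apply hid; idsimp; reflexivity.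
Qed.

Lemma rphi' (Z X Y : ob D) (C : hor Z A) (N : hor X Y) (k : sq (hcomp C fh) N) :
  (((runitinv C ;; (sqid C ⊙ p2)) ;; k) ⊙ (p1 ;; hunitSq (sqR k))) ;; runit N = k.
Proof.
  transitivity (((runitinv C ;; (sqid C ⊙ p2)) ⊙ p1) ;; (k ⊙ hunitSq (sqR k)) ;; runit N).
  { apply cong_l. rewrite merge'. apply sqh_irr. }
  rewrite sqcomp_assoc, runit_nat2, <- sqcomp_assoc, rkey'. apply sqcomp_id_l.
Qed.

Lemma rcell_cocart (Z : ob D) (C : hor Z A) : cocart (runitinv C ;; (sqid C ⊙ p2)).
Proof.
  split.
  - intros X Y N th g h Hl Hr.
    exists ((th ⊙ (p1 ;; hunitSq h)) ;; runit N).
    split; [vs|split; [vs|]].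
    transitivity (runitinv C ;; ((th ⊙ hunitSq (vcomp f h)) ;; runit N)).
    { rewrite !sqcomp_assoc. apply cong_r. rewrite <- sqcomp_assoc, merge'. apply cong_l.
      apply hcongr; [apply sqcomp_id_l| rewrite <- sqcomp_assoc, Hc, hunitSq_comp; reflexivity]. }
    rewrite runit_nat2, <- sqcomp_assoc, runit_inv2. apply sqcomp_id_l.
  - intros X Y N k k' HL HR H.
    rewrite <- (rphi' k), <- (rphi' k'). apply cong_l. apply hcongr; [exact H|].
    rewrite HR. reflexivity.
Qed.
End Comp.

Section Conj.
Variables (A B : ob D) (f : vhom A B) (fc : hor B A) (q1 : sq fc (hunit B)) (q2 : sq (hunit A) fc)
 (H1L : sqL q1 = vid B) (H1R : sqR q1 = f) (H2L : sqL q2 = f) (H2R : sqR q2 = vid A)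
 (Hc : q2 ;; q1 = hunitSq f)
 (Hk : forall e : sqR q1 = sqL q2, runitinv fc ;; sqh e ;; lunit fc = sqid fc).

Lemma conjA (e : sqR q1 = sqL q2) : sqh e ;; lunit fc = runit fc.
Proof.
  rewrite <- (sqcomp_id_l (sqh e ;; lunit fc)), <- runit_inv1, !sqcomp_assoc, <- (sqcomp_assoc (runitinv fc)), Hk.
  apply sqcomp_id_r.
Qed.

Lemma conjB (e : sqR q1 = sqL q2) : runitinv fc ;; sqh e = lunitinv fc.
Proof.
  rewrite <- (sqcomp_id_r (runitinv fc ;; sqh e)), <- lunit_inv1, <- !sqcomp_assoc, Hk.
  apply sqcomp_id_l.
Qed.

Lemma rkey (C : ob D) (M : hor C B) :
  runitinv (hcomp M fc) ;; (((sqid M ⊙ q1) ;; runit M) ⊙ q2) = sqid _.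
Proof.
  transitivity (runitinv (hcomp M fc) ;; (((sqid M ⊙ q1) ⊙ q2) ;; (runit M ⊙ sqid fc))).
  { apply cong_r. rewrite merge'. apply hcongr; idsimp; reflexivity. }
  transitivity (runitinv (hcomp M fc) ;; ((((sqid M ⊙ q1) ⊙ q2) ;; assoc M (hunit B) fc) ;; (sqid M ⊙ lunit fc))).
  { apply cong_r. rewrite sqcomp_assoc, tri'. apply cong_r. apply sqh_irr. }
  rewrite anat_l, sqcomp_assoc, merge'.
  transitivity (runitinv (hcomp M fc) ;; (assoc M fc (hunit A) ;; (sqid M ⊙ runit fc))).
  { apply cong_r. apply cong_r. apply hcongr; [idsimp; reflexivity|apply conjA]. }
  rewrite kelly_r. apply runit_inv2.
Qed.

Lemma rphi (C X Y : ob D) (M : hor C B) (N : hor X Y) (k : sq N (hcomp M fc)) :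
  runitinv N ;; ((k ;; ((sqid M ⊙ q1) ;; runit M)) ⊙ (hunitSq (sqR k) ;; q2)) = k.
Proof.
  transitivity (runitinv N ;; ((k ⊙ hunitSq (sqR k)) ;; (((sqid M ⊙ q1) ;; runit M) ⊙ q2))).
  { apply cong_r. rewrite merge'. apply sqh_irr. }
  rewrite <- sqcomp_assoc, runitinv_nat2, sqcomp_assoc, rkey. apply sqcomp_id_r.
Qed.

Lemma rcell_cart (C : ob D) (M : hor C B) : cart ((sqid M ⊙ q1) ;; runit M).
Proof.
  split.
  - intros X Y N th g h Hl Hr.
    exists (runitinv N ;; (th ⊙ (hunitSq h ;; q2))).
    split; [vs|split; [vs|]].
    transitivity (runitinv N ;; (th ⊙ hunitSq (vcomp h f) ;; runit M)).
    { rewrite !sqcomp_assoc. apply cong_r. rewrite <- sqcomp_assoc, merge'. apply cong_l.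
      apply hcongr.
      - apply sqcomp_id_r.
      - rewrite sqcomp_assoc, Hc, hunitSq_comp. reflexivity. }
    rewrite runit_nat2, <- sqcomp_assoc, runit_inv2. apply sqcomp_id_l.
  - intros X Y N k k' HL HR H.
    rewrite <- (rphi k), <- (rphi k'). apply cong_r. apply hcongr; [exact H|].
    rewrite HR. reflexivity.
Qed.

Lemma lkey' (Z : ob D) (C : hor A Z) :
  (q1 ⊙ (lunitinv C ;; (q2 ⊙ sqid C))) ;; lunit (hcomp fc C) = sqid _.
Proof.
  transitivity (((sqid fc ⊙ lunitinv C) ;; (q1 ⊙ (q2 ⊙ sqid C))) ;; lunit (hcomp fc C)).
  { apply cong_l. rewrite merge'. apply hcongr; idsimp; reflexivity. }
  rewrite triLi, (sqcomp_assoc (sqh _) (assoc _ _ _)), anat_r, <- (sqcomp_assoc (sqh _) (sqh _)), merge'.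
  transitivity (((lunitinv fc ⊙ sqid C) ;; assoc (hunit B) fc C) ;; lunit (hcomp fc C)).
  { apply cong_l. apply cong_l. apply hcongr; [apply conjB|idsimp; reflexivity]. }
  rewrite kelly_li. apply lunit_inv2.
Qed.

Lemma lphi' (Z X Y : ob D) (C : hor A Z) (N : hor X Y) (k : sq (hcomp fc C) N) :
  ((q1 ;; hunitSq (sqL k)) ⊙ ((lunitinv C ;; (q2 ⊙ sqid C)) ;; k)) ;; lunit N = k.
Proof.
  transitivity ((q1 ⊙ (lunitinv C ;; (q2 ⊙ sqid C))) ;; (hunitSq (sqL k) ⊙ k) ;; lunit N).
  { apply cong_l. rewrite merge'. apply sqh_irr. }
  rewrite sqcomp_assoc, lunit_nat2, <- sqcomp_assoc, lkey'. apply sqcomp_id_l.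
Qed.

Lemma lcell_cocart (Z : ob D) (C : hor A Z) : cocart (lunitinv C ;; (q2 ⊙ sqid C)).
Proof.
  split.
  - intros X Y N th g h Hl Hr.
    exists (((q1 ;; hunitSq g) ⊙ th) ;; lunit N).
    split; [vs|split; [vs|]].
    transitivity (lunitinv C ;; ((hunitSq (vcomp f g) ⊙ th) ;; lunit N)).
    { rewrite !sqcomp_assoc. apply cong_r. rewrite <- sqcomp_assoc, merge'. apply cong_l.
      apply hcongr; [rewrite <- sqcomp_assoc, Hc, hunitSq_comp; reflexivity|apply sqcomp_id_l]. }
    rewrite lunit_nat2, <- sqcomp_assoc, lunit_inv2. apply sqcomp_id_l.
  - intros X Y N k k' HL HR H.
    rewrite <- (lphi' k), <- (lphi' k'). apply cong_l. apply hcongr; [|exact H].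
    rewrite HL. reflexivity.
Qed.
End Conj.
End Cells.


Ltac fin := first [reflexivity | apply sqh_irr | (apply hcongr; fin) | (apply cong_l; fin) | (apply cong_r; fin)].

Section Lift.
Variable D : DoubleCat.

Lemma mnd_hom_eq (X Y : monad D) (a b : mnd_hom X Y) : mh a = mh b -> a = b.
Proof.
  destruct a as [a1 a2 a3 a4], b as [b1 b2 b3 b4]; simpl; intros ->.
  f_equal; apply proof_irrelevance.
Qed.

Lemma cmd_hom_eq (X Y : comonad D) (a b : cmd_hom X Y) : ch a = ch b -> a = b.
Proof.
  destruct a as [a1 a2 a3 a4], b as [b1 b2 b3 b4]; simpl; intros ->.
  f_equal; apply proof_irrelevance.
Qed.

Lemma mnd_lift (X : monad D) (A : ob D) (f : vhom A (mA X)) (P : hor A A) (r : sq P (mM X))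
  (Hrl : sqL r = f) (Hrr : sqR r = f) (cr : cart r) :
  exists (Y : monad D) (phi : mnd_hom Y X),
    existT (fun A' => vhom A' (mA X)) (mA Y) (mnd_proj phi) = existT _ A f /\
    @cartesian (ob D) (@vhom D) (@vcomp D) (monad D) (@mnd_hom D) (@mnd_comp D) (@mA D) (@mnd_proj D) Y X phi.
Proof.
  destruct cr as [ex un].
  destruct (ex _ _ _ ((r ⊙ r) ;; mmul X) (vid A) (vid A) ltac:(vs) ltac:(vs)) as [mu [muL [muR muE]]].
  destruct (ex _ _ _ (hunitSq f ;; munit X) (vid A) (vid A) ltac:(vs) ltac:(vs)) as [eta [etaL [etaR etaE]]].
  assert (Lassoc : forall (e1 : sqR mu = sqL (sqid P)) (e2 : sqR (sqid P) = sqL mu),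
    sqh e1 ;; mu = assoc P P P ;; (sqh e2 ;; mu)).
  { intros e1 e2. apply un; [vs|vs|].
    transitivity (((r ⊙ r) ⊙ r) ;; ((mmul X ⊙ sqid (mM X)) ;; mmul X)).
    { rewrite sqcomp_assoc, muE, <- sqcomp_assoc, merge', <- sqcomp_assoc, merge'. apply cong_l.
      apply hcongr; [rewrite muE; fin | idsimp; reflexivity]. }
    rewrite (mmul_assoc _ (ltac:(vs) : sqR (sqid (mM X)) = sqL (mmul X))).
    rewrite <- sqcomp_assoc, anat_l.
    rewrite !sqcomp_assoc, muE. refine (cong_r (assoc P P P) _).
    rewrite <- !sqcomp_assoc, !merge'. apply cong_l.
    apply hcongr; [idsimp; reflexivity|rewrite muE; fin]. }
  assert (Lunit : forall e : sqR eta = sqL (sqid P), sqh e ;; mu = lunit P).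
  { intros e. apply un; [vs|vs|].
    transitivity ((hunitSq f ⊙ r) ;; ((munit X ⊙ sqid (mM X)) ;; mmul X)).
    { rewrite sqcomp_assoc, muE, <- !sqcomp_assoc, merge', merge'. apply cong_l.
      apply hcongr; [rewrite etaE; reflexivity|idsimp; reflexivity]. }
    rewrite munit_left, lunit_nat2. reflexivity. }
  assert (Runit : forall e : sqR (sqid P) = sqL eta, sqh e ;; mu = runit P).
  { intros e. apply un; [vs|vs|].
    transitivity ((r ⊙ hunitSq f) ;; ((sqid (mM X) ⊙ munit X) ;; mmul X)).
    { rewrite sqcomp_assoc, muE, <- !sqcomp_assoc, merge', merge'. apply cong_l.
      apply hcongr; [idsimp; reflexivity|rewrite etaE; reflexivity]. }
    rewrite munit_right, runit_nat2. reflexivity. }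
  pose (Y := @Build_monad D A P mu eta muL muR etaL etaR Lassoc Lunit Runit).
  assert (Hs : sqL r = sqR r) by (rewrite Hrl, Hrr; reflexivity).
  assert (Hmul : forall e : sqR r = sqL r, mmul Y ;; r = sqh e ;; mmul X).
  { intro e. simpl. rewrite muE. apply cong_l, sqh_irr. }
  assert (Hun : munit Y ;; r = hunitSq (sqL r) ;; munit X).
  { simpl. rewrite etaE, Hrl. reflexivity. }
  pose (phi := @Build_mnd_hom D Y X r Hs Hmul Hun).
  exists Y, phi. split.
  { unfold mnd_proj. simpl. rewrite Hrl. reflexivity. }
  intros Z g h Hg. unfold mnd_proj in Hg. simpl in Hg.
  assert (HgR : sqR (mh g) = vcomp h (sqR r)).
  { rewrite <- (mh_sides g), Hg, Hrl, Hrr. reflexivity. }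
  destruct (ex _ _ _ (mh g) h h Hg HgR) as [k0 [k0L [k0R k0E]]].
  assert (ks : sqL k0 = sqR k0) by (rewrite k0L, k0R; reflexivity).
  assert (kmul : forall e : sqR k0 = sqL k0, mmul Z ;; k0 = sqh e ;; mmul Y).
  { intro e. simpl. apply un; [vs|vs|].
    rewrite sqcomp_assoc, k0E, (mh_mul (m := g) (eq_sym (mh_sides g))).
    rewrite sqcomp_assoc, muE, <- sqcomp_assoc, merge'. apply cong_l. apply hcongr; exact (eq_sym k0E). }
  assert (kun : munit Z ;; k0 = hunitSq (sqL k0) ;; munit Y).
  { simpl. apply un; [vs|vs|].
    rewrite sqcomp_assoc, k0E, mh_unit, sqcomp_assoc, etaE, <- sqcomp_assoc, <- hunitSq_comp, Hg, k0L, Hrl.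
    reflexivity. }
  exists (@Build_mnd_hom D Z Y k0 ks kmul kun). split.
  - split; [exact k0L|]. apply mnd_hom_eq. simpl. exact k0E.
  - intros k' [Hk'1 Hk'2]. apply mnd_hom_eq. simpl. unfold mnd_proj in Hk'1.
    apply un.
    + exact (eq_trans Hk'1 (eq_sym k0L)).
    + exact (eq_trans (eq_sym (mh_sides k')) (eq_trans Hk'1 (eq_sym k0R))).
    + rewrite k0E. change (mh (mnd_comp k' phi) = mh g). rewrite Hk'2. reflexivity.
Qed.

Lemma cmd_lift (X : comonad D) (B : ob D) (f : vhom (cA X) B) (P : hor B B) (s : sq (cC X) P)
  (Hsl : sqL s = f) (Hsr : sqR s = f) (cs : cocart s) :
  exists (Y : comonad D) (phi : cmd_hom X Y),
    existT (fun A' => vhom (cA X) A') (cA Y) (cmd_proj phi) = existT _ B f /\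
    @cocartesian (ob D) (@vhom D) (@vcomp D) (comonad D) (@cmd_hom D) (@cmd_comp D) (@cA D) (@cmd_proj D) X Y phi.
Proof.
  destruct cs as [ex un].
  destruct (ex _ _ _ (cdelta X ;; (s ⊙ s)) (vid B) (vid B) ltac:(vs) ltac:(vs)) as [de [deL [deR deE]]].
  destruct (ex _ _ _ (ceps X ;; hunitSq f) (vid B) (vid B) ltac:(vs) ltac:(vs)) as [ep [epL [epR epE]]].
  assert (Lco : forall (e1 : sqR de = sqL (sqid P)) (e2 : sqR (sqid P) = sqL de),
    de ;; sqh e1 ;; assoc P P P = de ;; sqh e2).
  { intros e1 e2. apply un; [vs|vs|].
    transitivity (cdelta X ;; (cdelta X ⊙ sqid (cC X)) ;; ((s ⊙ s) ⊙ s) ;; assoc P P P).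
    { rewrite <- !sqcomp_assoc, deE. apply cong_l. rewrite !sqcomp_assoc. apply cong_r.
      rewrite !merge'. apply hcongr; [rewrite deE; fin | idsimp; reflexivity]. }
    transitivity (cdelta X ;; (cdelta X ⊙ sqid (cC X)) ;; assoc (cC X) (cC X) (cC X) ;; (s ⊙ (s ⊙ s))).
    { rewrite !sqcomp_assoc. apply cong_r, cong_r. rewrite anat_l. fin. }
    rewrite (cdelta_coassoc _ (ltac:(vs) : sqR (sqid (cC X)) = sqL (cdelta X))).
    transitivity (cdelta X ;; (s ⊙ (cdelta X ;; (s ⊙ s)))).
    { rewrite sqcomp_assoc, merge'. apply cong_r. apply hcongr; idsimp; reflexivity. }
    rewrite <- sqcomp_assoc, deE, sqcomp_assoc, merge'. apply cong_r.
    apply hcongr; [idsimp; reflexivity| rewrite deE; fin]. }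
  assert (Lleft : forall e : sqR ep = sqL (sqid P), de ;; sqh e ;; lunit P = sqid P).
  { intros e. apply un; [vs|vs|].
    transitivity (cdelta X ;; (ceps X ⊙ sqid (cC X)) ;; ((hunitSq f ⊙ s) ;; lunit P)).
    { rewrite <- !sqcomp_assoc, deE. apply cong_l. rewrite !sqcomp_assoc. apply cong_r.
      rewrite !merge'. apply hcongr; [rewrite epE; reflexivity|idsimp; reflexivity]. }
    rewrite lunit_nat2, <- sqcomp_assoc, ceps_left, sqcomp_id_l, sqcomp_id_r. reflexivity. }
  assert (Lright : forall e : sqR (sqid P) = sqL ep, de ;; sqh e ;; runit P = sqid P).
  { intros e. apply un; [vs|vs|].
    transitivity (cdelta X ;; (sqid (cC X) ⊙ ceps X) ;; ((s ⊙ hunitSq f) ;; runit P)).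
    { rewrite <- !sqcomp_assoc, deE. apply cong_l. rewrite !sqcomp_assoc. apply cong_r.
      rewrite !merge'. apply hcongr; [idsimp; reflexivity|rewrite epE; reflexivity]. }
    rewrite runit_nat2, <- sqcomp_assoc, ceps_right, sqcomp_id_l, sqcomp_id_r. reflexivity. }
  pose (Y := @Build_comonad D B P de ep deL deR epL epR Lco Lleft Lright).
  assert (Hs : sqL s = sqR s) by (rewrite Hsl, Hsr; reflexivity).
  assert (Hdel : forall e : sqR s = sqL s, cdelta X ;; sqh e = s ;; cdelta Y).
  { intro e. simpl. rewrite deE. apply cong_r, sqh_irr. }
  assert (Hep : ceps X ;; hunitSq (sqL s) = s ;; ceps Y).
  { simpl. rewrite epE, Hsl. reflexivity. }
  pose (phi := @Build_cmd_hom D X Y s Hs Hdel Hep).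
  exists Y, phi. split.
  { unfold cmd_proj. simpl. rewrite Hsl. reflexivity. }
  intros Z g h Hg. unfold cmd_proj in Hg. simpl in Hg.
  assert (HgR : sqR (ch g) = vcomp (sqR s) h).
  { rewrite <- (ch_sides g), Hg, Hsl, Hsr. reflexivity. }
  destruct (ex _ _ _ (ch g) h h Hg HgR) as [k0 [k0L [k0R k0E]]].
  assert (ks : sqL k0 = sqR k0) by (rewrite k0L, k0R; reflexivity).
  assert (kdel : forall e : sqR k0 = sqL k0, cdelta Y ;; sqh e = k0 ;; cdelta Z).
  { intro e. simpl. apply un; [vs|vs|].
    rewrite <- !sqcomp_assoc, deE, k0E, sqcomp_assoc, merge'.
    rewrite <- (ch_delta (c := g) (eq_sym (ch_sides g))). apply cong_r. apply hcongr; exact k0E. }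
  assert (keps : ceps Y ;; hunitSq (sqL k0) = k0 ;; ceps Z).
  { simpl. apply un; [vs|vs|].
    rewrite <- !sqcomp_assoc, epE, k0E, <- ch_eps, sqcomp_assoc, <- hunitSq_comp, Hg, k0L, Hsl.
    reflexivity. }
  exists (@Build_cmd_hom D Y Z k0 ks kdel keps). split.
  - split; [exact k0L|]. apply cmd_hom_eq. simpl. exact k0E.
  - intros k' [Hk'1 Hk'2]. apply cmd_hom_eq. simpl. unfold cmd_proj in Hk'1.
    apply un.
    + exact (eq_trans Hk'1 (eq_sym k0L)).
    + exact (eq_trans (eq_sym (ch_sides k')) (eq_trans Hk'1 (eq_sym k0R))).
    + rewrite k0E. change (ch (cmd_comp phi k') = ch g). rewrite Hk'2. reflexivity.
Qed.
End Lift.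


Theorem proposition3p17 (D : DoubleCat) :
  fibrant D ->
  @is_fibration (ob D) (@vhom D) (@vcomp D)
    (monad D) (@mnd_hom D) (@mnd_comp D) (@mA D) (@mnd_proj D) /\
  @is_opfibration (ob D) (@vhom D) (@vcomp D)
    (comonad D) (@cmd_hom D) (@cmd_comp D) (@cA D) (@cmd_proj D).
Proof.
  intros Hf. split.
  - intros X A f.
    destruct (Hf A (mA X) f) as [[fh Hfh] [fc Hfc]].
    destruct Hfh as (p1 & p2 & H1L & H1R & H2L & H2R & Hc & Hk).
    destruct Hfc as (q1 & q2 & G1L & G1R & G2L & G2R & Gc & Gk).
    pose proof (c1 := lcell_cart H1L H1R H2L H2R Hc Hk (mM X)).
    pose proof (c2 := rcell_cart G1L G1R G2L G2R Gc Gk (hcomp fh (mM X))).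
    pose proof (c := cart_comp c2 c1).
    refine (mnd_lift _ _ c); vs.
  - intros X B f.
    destruct (Hf (cA X) B f) as [[fh Hfh] [fc Hfc]].
    destruct Hfh as (p1 & p2 & H1L & H1R & H2L & H2R & Hc & Hk).
    destruct Hfc as (q1 & q2 & G1L & G1R & G2L & G2R & Gc & Gk).
    pose proof (c1 := lcell_cocart G1L G1R G2L G2R Gc Gk (cC X)).
    pose proof (c2 := rcell_cocart H1L H1R H2L H2R Hc Hk (hcomp fc (cC X))).
    pose proof (c := cocart_comp c1 c2).
    refine (cmd_lift _ _ c); vs.
Qed.
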